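(* Let $K/\mathbb{Q}$ be a finite extension with ring of integers $A$, let $f:A\to\mathbb{N}$ be any function, let $t$ be a positive integer, and let $H(f,t)=\sum_{k\in A}\big(k^{f(k)}(k^t-1)\big)$ be the sum of the principal ideals generated by the elements $k^{f(k)}(k^t-1)$. Then $\ker pr_t\subseteq H(f,t)$; in particular $H(f,t)$ is $t$-congruing.
   Context: For a maximal ideal $\mathfrak p$ of $A$, $H^{\mathfrak p}_t$ is the ideal of the completion $\hat A_{\mathfrak p}$ generated by all $x^t-1$ with $x\in\hat A_{\mathfrak p}^\times$; $pr_t:A\to\prod_{\mathfrak p}\hat A_{\mathfrak p}/H^{\mathfrak p}_t$ (over all maximal ideals) has $\mathfrak p$-component completion followed by reduction mod $H^{\mathfrak p}_t$. An ideal $I$ is $t$-congruing if for every $a\in A$ there is $N\in\mathbb{N}$ with $a^N(a^t-1)\in I$. *)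

(* Defs.v *)
From HB Require Import structures.
From mathcomp Require Import all_boot all_order all_algebra all_field.
Set Implicit Arguments. Unset Strict Implicit. Unset Printing Implicit Defensive.
Import GRing.Theory.
Local Open Scope ring_scope.

(* x lies in the ring of integers A of K: x is a root of a monic integer polynomial. *)
Definition integralZ (K : fieldExtType rat) (x : K) : Prop :=
  exists p : {poly int}, p \is monic /\ root (map_poly (fun z : int => z%:~R) p) x.

(* Ideals of A, represented as predicates on K contained in A. *)
Definition is_ideal (K : fieldExtType rat) (I : K -> Prop) : Prop :=
  [/\ (forall x, I x -> integralZ x), I 0,
      (forall x y, I x -> I y -> I (x + y)) &
      (forall a x, integralZ a -> I x -> I (a * x))].

Definition maximal_ideal (K : fieldExtType rat) (P : K -> Prop) : Prop :=
  [/\ is_ideal P, ~ P 1 &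
      forall J : K -> Prop, is_ideal J -> (forall x, P x -> J x) ->
        (forall x, J x -> P x) \/ J 1].

Fixpoint ideal_pow (K : fieldExtType rat) (P : K -> Prop) (n : nat) : K -> Prop :=
  match n with
  | 0 => fun x => integralZ x
  | n.+1 => fun x => exists m (a b : 'I_m -> K),
              (forall i, P (a i) /\ ideal_pow P n (b i)) /\
              x = \sum_(i < m) a i * b i
  end.

(* Elements of the completion \hat A_P = lim A/P^n, given by compatible
   sequences of representatives: s n in A and s (n+1) = s n mod P^n.
   Two such sequences define the same element iff s n = s' n mod P^n for all n. *)
Definition compl_seq (K : fieldExtType rat) (P : K -> Prop) (s : nat -> K) : Prop :=
  (forall n, integralZ (s n)) /\ (forall n, ideal_pow P n (s n.+1 - s n)).

(* The image of a in \hat A_P lies in H^P_t, the ideal of \hat A_P generated by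
   all x^t - 1 with x a unit of \hat A_P (y is the inverse of x). *)
Definition in_HPt (K : fieldExtType rat) (P : K -> Prop) (t : nat) (a : K) : Prop :=
  exists m (c x y : 'I_m -> nat -> K),
    (forall i, [/\ compl_seq P (c i), compl_seq P (x i), compl_seq P (y i) &
                   forall n, ideal_pow P n (x i n * y i n - 1)]) /\
    (forall n, ideal_pow P n (a - \sum_(i < m) c i n * (x i n ^+ t - 1))).

(* a lies in ker pr_t : every P-component of pr_t a vanishes. *)
Definition ker_pr (K : fieldExtType rat) (t : nat) (a : K) : Prop :=
  integralZ a /\ forall P : K -> Prop, maximal_ideal P -> in_HPt P t a.

Definition Hft (K : fieldExtType rat) (f : K -> nat) (t : nat) (x : K) : Prop :=
  exists m (c k : 'I_m -> K),
    (forall i, integralZ (c i) /\ integralZ (k i)) /\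
    x = \sum_(i < m) c i * (k i ^+ f (k i) * (k i ^+ t - 1)).

Definition t_congruing (K : fieldExtType rat) (t : nat) (I : K -> Prop) : Prop :=
  forall a, integralZ a -> exists N : nat, I (a ^+ N * (a ^+ t - 1)).

(* Main.v *)
Require Import Defs.
From HB Require Import structures.
From mathcomp Require Import all_boot all_order all_algebra all_field.
From mathcomp Require Import ring.
From Stdlib Require Import Classical ClassicalEpsilon.
Set Implicit Arguments. Unset Strict Implicit. Unset Printing Implicit Defensive.
Import GRing.Theory.
Import Num.Theory.
Local Open Scope ring_scope.



Section Main.
Variable K : fieldExtType rat.
Local Notation Int := (@integralZ K).

Lemma IntE (x : K) : Int x <-> integralOver intr x.
Proof. by split=> [[p [mp rp]]|[p mp rp]]; exists p. Qed.

Lemma Int_add x y : Int x -> Int y -> Int (x + y).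
Proof. by move=> /IntE hx /IntE hy; apply/IntE; apply: integral_add. Qed.
Lemma Int_mul x y : Int x -> Int y -> Int (x * y).
Proof. by move=> /IntE hx /IntE hy; apply/IntE; apply: integral_mul. Qed.
Lemma Int_opp x : Int x -> Int (- x).
Proof. by move=> /IntE hx; apply/IntE; apply: integral_opp. Qed.
Lemma Int_sub x y : Int x -> Int y -> Int (x - y).
Proof. by move=> hx hy; apply: Int_add=> //; apply: Int_opp. Qed.
Lemma Int_int (z : int) : Int (z%:~R).
Proof. by apply/IntE; apply: integral_id. Qed.
Lemma Int_nat (n : nat) : Int (n%:R).
Proof. by apply/IntE; apply: integral_nat. Qed.
Lemma Int0 : Int 0. Proof. exact: (Int_nat 0). Qed.
Lemma Int1 : Int 1. Proof. exact: (Int_nat 1). Qed.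
Lemma Int_exp x n : Int x -> Int (x ^+ n).
Proof. move=> hx; elim: n => [|n IH]; first by rewrite expr0; apply: Int1. by rewrite exprS; apply: Int_mul. Qed.
Lemma Int_sum (I : Type) (r : seq I) (P : pred I) (F : I -> K) :
  (forall i, P i -> Int (F i)) -> Int (\sum_(i <- r | P i) F i).
Proof. by move=> h; elim/big_ind: _ => //; [exact: Int0 | exact: Int_add]. Qed.
Lemma Int_prod (I : Type) (r : seq I) (P : pred I) (F : I -> K) :
  (forall i, P i -> Int (F i)) -> Int (\prod_(i <- r | P i) F i).
Proof. by move=> h; elim/big_ind: _ => //; [exact: Int1 | exact: Int_mul]. Qed.

Section Ideal.
Variable I : K -> Prop.
Hypothesis hI : is_ideal I.
Lemma I_Int x : I x -> Int x. Proof. by case: hI => h _ _ _; apply: h. Qed.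
Lemma I0 : I 0. Proof. by case: hI. Qed.
Lemma I_add x y : I x -> I y -> I (x + y). Proof. by case: hI => _ _ h _; apply: h. Qed.
Lemma I_mul a x : Int a -> I x -> I (a * x). Proof. by case: hI => _ _ _ h; apply: h. Qed.
Lemma I_mulr a x : Int a -> I x -> I (x * a). Proof. by rewrite mulrC; apply: I_mul. Qed.
Lemma I_opp x : I x -> I (- x).
Proof. by move=> h; rewrite -mulN1r; apply: I_mul => //; apply: Int_opp; apply: Int1. Qed.
Lemma I_sub x y : I x -> I y -> I (x - y).
Proof. by move=> hx hy; apply: I_add => //; apply: I_opp. Qed.
Lemma I_sum (J : Type) (r : seq J) (P : pred J) (F : J -> K) :
  (forall i, P i -> I (F i)) -> I (\sum_(i <- r | P i) F i).
Proof. by move=> h; elim/big_ind: _ => //; [exact: I0 | exact: I_add]. Qed.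
End Ideal.

Lemma Int_ideal : is_ideal Int.
Proof. split=> //; [exact: Int0|exact: Int_add| exact: Int_mul]. Qed.


Definition sums (Q : K -> Prop) (x : K) :=
  exists l : seq K, (forall q, q \in l -> Q q) /\ x = \sum_(q <- l) q.

Lemma ord_sums (R : K -> K -> Prop) (F : K -> K -> K) x :
  (exists m (a b : 'I_m -> K), (forall i, R (a i) (b i)) /\ x = \sum_(i < m) F (a i) (b i))
  <-> sums (fun z => exists a b, R a b /\ z = F a b) x.
Proof.
split.
  move=> [m [a [b [hR ->]]]].
  exists [seq F (a i) (b i) | i <- enum 'I_m]; split; last by rewrite big_map big_enum.
  by move=> q /mapP [i _ ->]; exists (a i), (b i).
move=> [l [hl ->]].
have h : forall i : 'I_(size l), exists ab : K * K, R ab.1 ab.2 /\ nth 0 l i = F ab.1 ab.2.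
  move=> i; have /hl [a [b [? ?]]] : nth 0 l i \in l by apply: mem_nth.
  by exists (a, b).
pose g i := proj1_sig (constructive_indefinite_description _ (h i)).
have hg i : R (g i).1 (g i).2 /\ nth 0 l i = F (g i).1 (g i).2.
  exact: (proj2_sig (constructive_indefinite_description _ (h i))).
exists (size l), (fun i => (g i).1), (fun i => (g i).2); split; first by move=> i; case: (hg i).
rewrite (big_nth 0) big_mkord; apply: eq_bigr => i _; by case: (hg i).
Qed.

Lemma sums_nil Q : sums Q 0.
Proof. by exists [::]; split; rewrite ?big_nil. Qed.
Lemma sums_one (Q : K -> Prop) x : Q x -> sums Q x.
Proof. by exists [:: x]; split; [move=> q; rewrite inE => /eqP -> | rewrite big_seq1]. Qed.
Lemma sums_add Q x y : sums Q x -> sums Q y -> sums Q (x + y).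
Proof.
move=> [l1 [h1 ->]] [l2 [h2 ->]]; exists (l1 ++ l2); split; last by rewrite big_cat.
by move=> q; rewrite mem_cat => /orP [] ?; [apply: h1|apply: h2].
Qed.
Lemma sums_map (Q Q' : K -> Prop) (g : {additive K -> K}) x :
  (forall q, Q q -> Q' (g q)) -> sums Q x -> sums Q' (g x).
Proof.
move=> hq [l [hl ->]]; exists (map g l); split; last by rewrite big_map raddf_sum.
by move=> q /mapP [q' /hl ? ->]; apply: hq.
Qed.
Lemma sums_ind (Q S : K -> Prop) : S 0 -> (forall x y, S x -> S y -> S (x + y)) ->
  (forall q, Q q -> S q) -> forall x, sums Q x -> S x.
Proof.
move=> h0 hadd hq x [l [hl ->]]; rewrite big_seq; elim/big_ind: _ => // i /hl; exact: hq.
Qed.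

Lemma sums_mul (Q Q' : K -> Prop) a x :
  (forall q, Q q -> Q' (a * q)) -> sums Q x -> sums Q' (a * x).
Proof.
move=> hq [l [hl ->]]; exists (map ( *%R a) l); split; last by rewrite big_map big_distrr.
by move=> q /mapP [q' /hl ? ->]; apply: hq.
Qed.

Lemma powS (P : K -> Prop) n x : ideal_pow P n.+1 x <->
  sums (fun z => exists a b, (P a /\ ideal_pow P n b) /\ z = a * b) x.
Proof. exact: (ord_sums (fun a b => P a /\ ideal_pow P n b) (fun a b => a * b) x). Qed.

Lemma pow_ideal (P : K -> Prop) n : is_ideal P -> is_ideal (ideal_pow P n).
Proof.
move=> hP; elim: n => [|n IH]; first exact: Int_ideal.
split.
- move=> x /powS; apply: sums_ind; [exact: Int0 | exact: Int_add|].
  move=> q [a [b [[ha hb] ->]]]; apply: Int_mul; [exact: (I_Int hP) | exact: (I_Int IH)].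
- apply/powS; exact: sums_nil.
- by move=> x y /powS hx /powS hy; apply/powS; apply: sums_add.
- move=> c x hc /powS hx; apply/powS; apply: sums_mul hx.
  move=> q [a [b [[ha hb] ->]]]; exists a, (c * b); split; last by rewrite mulrCA.
  by split=> //; apply: I_mul.
Qed.

Lemma pow_mul (P : K -> Prop) n a b : is_ideal P -> P a -> ideal_pow P n b -> ideal_pow P n.+1 (a * b).
Proof. by move=> hP ha hb; apply/powS; apply: sums_one; exists a, b. Qed.

Lemma max_prime (P : K -> Prop) x y : maximal_ideal P -> Int x -> Int y -> P (x * y) -> P x \/ P y.
Proof.
move=> [hP hP1 hmax] hx hy hxy; case: (classic (P x)) => hPx; [by left | right].
pose J z := exists u b, P u /\ Int b /\ z = u + b * x.
have hJ : is_ideal J.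
  split.
  - by move=> z [u [b [hu [hb ->]]]]; apply: Int_add; [exact: (I_Int hP)|exact: Int_mul].
  - by exists 0, 0; rewrite mul0r addr0; split; [exact: (I0 hP)|split; [exact: Int0|]].
  - move=> z1 z2 [u1 [b1 [h1 [hb1 ->]]]] [u2 [b2 [h2 [hb2 ->]]]].
    exists (u1 + u2), (b1 + b2); split; first exact: I_add.
    by split; [exact: Int_add | rewrite mulrDl addrACA].
  - move=> c z hc [u [b [hu [hb ->]]]]; exists (c * u), (c * b); split; first exact: I_mul.
    by split; [exact: Int_mul | rewrite mulrDr mulrA].
case: (hmax J hJ).
- by move=> z hz; exists z, 0; rewrite mul0r addr0; split=> //; split=> //; exact: Int0.
- move=> hJP; exfalso; apply: hPx; apply: hJP.
  by exists 0, 1; rewrite add0r mul1r; split; [exact: (I0 hP)|split; [exact: Int1|]].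
move=> [u [b [hu [hb e]]]].
have -> : y = u * y + b * (x * y) by rewrite mulrA -mulrDl -e mul1r.
apply: I_add=> //; [exact: I_mulr | exact: I_mul].
Qed.
End Main.



Section Main2.
Variable K : fieldExtType rat.
Local Notation Int := (@integralZ K).
Variables (f : K -> nat) (t : nat).
Local Notation H := (Hft f t).

Lemma HftS x : H x <->
  sums (fun z => exists c k, (Int c /\ Int k) /\ z = c * (k ^+ f k * (k ^+ t - 1))) x.
Proof. exact: (ord_sums (fun c k => Int c /\ Int k) (fun c k => c * (k ^+ f k * (k ^+ t - 1))) x). Qed.

Lemma H_ideal : is_ideal H.
Proof.
split.
- move=> x /HftS; apply: sums_ind; [exact: Int0 | exact: Int_add|].
  move=> q [c [k [[hc hk] ->]]]; apply: Int_mul => //; apply: Int_mul; first exact: Int_exp.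
  by apply: Int_sub; [exact: Int_exp | exact: Int1].
- apply/HftS; exact: sums_nil.
- by move=> x y /HftS hx /HftS hy; apply/HftS; apply: sums_add.
- move=> c x hc /HftS hx; apply/HftS; apply: sums_mul hx.
  move=> q [a [b [[ha hb] ->]]]; exists (c * a), b; split; last exact: mulrA.
  by split=> //; apply: Int_mul.
Qed.

Lemma H_gen k : Int k -> H (k ^+ f k * (k ^+ t - 1)).
Proof. by move=> hk; apply/HftS; apply: sums_one; exists 1, k; rewrite mul1r; split=> //; split=> //; exact: Int1. Qed.

Lemma step1 (P : K -> Prop) a : is_ideal P -> in_HPt P t a ->
  forall n, exists h, H h /\ ideal_pow P n (a - h).
Proof.
move=> hP [m [c [x [y [hcxy hS]]]]] n.
have hPn := pow_ideal n hP.
pose F i := f (x i n).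
have hc i : Int (c i n) by case: (hcxy i) => [[? _] _ _ _].
have hx i : Int (x i n) by case: (hcxy i) => [_ [? _] _ _].
have hy i : Int (y i n) by case: (hcxy i) => [_ _ [? _] _].
have hxy i : ideal_pow P n (x i n * y i n - 1) by case: (hcxy i) => [_ _ _ ?].
exists (\sum_(i < m) (c i n * y i n ^+ F i) * (x i n ^+ f (x i n) * (x i n ^+ t - 1))); split.
  exists m, (fun i => c i n * y i n ^+ F i), (fun i => x i n); split=> // i.
  by split=> //; apply: Int_mul=> //; apply: Int_exp.
have -> : a - \sum_(i < m) (c i n * y i n ^+ F i) * (x i n ^+ f (x i n) * (x i n ^+ t - 1)) =
   (a - \sum_(i < m) c i n * (x i n ^+ t - 1)) +
   \sum_(i < m) (c i n * (x i n ^+ t - 1)) * (1 - (x i n * y i n) ^+ F i).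
  rewrite -addrA; congr (_ + _); rewrite -!sumrN -big_split /=; apply: eq_bigr => i _.
  rewrite /F exprMn; ring.
apply: I_add => //; apply: I_sum => // i _; apply: I_mul => //.
  apply: Int_mul => //; apply: Int_sub; [exact: Int_exp | exact: Int1].
rewrite -opprB subrX1 -mulNr; apply: I_mulr=> //; last exact: I_opp.
by apply: Int_sum => j _; apply: Int_exp; apply: Int_mul.
Qed.
End Main2.



Section Main3.
Variable K : fieldExtType rat.
Local Notation Int := (@integralZ K).

Lemma intr_scale (z : int) (v : K) : (z%:~R : K) * v = (z%:~R : rat) *: v.
Proof. by rewrite scaler_int mulrzl. Qed.

Lemma natr_neq0 (p : nat) : (0 < p)%N -> (p%:R : K) != 0.
Proof.
move=> hp; have -> : (p%:R : K) = in_alg K (p%:R : rat) by rewrite rmorph_nat.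
by rewrite fmorph_eq0 pnatr_eq0 -lt0n.
Qed.

Lemma rat_rel (m : nat) (v : nat -> K) : (\dim {:K} < m)%N ->
  exists k : 'I_m -> rat, \sum_(i < m) k i *: v i = 0 /\ exists i, k i != 0.
Proof.
move=> hm; pose X := [tuple v i | i < m].
have nf : ~~ free X.
  apply/negP=> /eqP hX; move: (dimvS (subvf <<X>>%VS)); rewrite hX size_tuple.
  by rewrite leqNgt hm.
apply: NNPP => hne; move/negP: nf; apply; apply/freeP => k hk.
have hk' : \sum_(i < m) k i *: v i = 0.
  rewrite -[RHS]hk; apply: eq_bigr => i _; by rewrite (nth_mktuple (fun i => v i)).
move=> i; apply: NNPP => hki; apply: hne; exists k; split=> //; exists i; exact/eqP.
Qed.

Lemma int_rel0 (m : nat) (v : nat -> K) : (\dim {:K} < m)%N ->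
  exists c : nat -> int, \sum_(i < m) (c i)%:~R * v i = 0 /\ exists i, (i < m)%N /\ c i != 0.
Proof.
move=> hm; have [k [hk [i0 hi0]]] := rat_rel v hm.
pose c (i : 'I_m) : int := numq (k i) * \prod_(j < m | j != i) denq (k j).
pose D : int := \prod_(j < m) denq (k j).
have hD : D != 0 by rewrite prodf_seq_neq0; apply/allP => j _; apply/implyP => _; exact: denq_neq0.
have hc i : (c i)%:~R = k i * D%:~R :> rat.
  by rewrite /c /D [in RHS](bigD1 i) //= !intrM numqE -mulrA.
pose c' n := odflt 0 (omap c (insub n)).
have hc' (i : 'I_m) : c' i = c i by rewrite /c' valK.
exists c'; split.
  rewrite (eq_bigr (fun i : 'I_m => (k i * D%:~R) *: v i)); last first.
    by move=> i _; rewrite hc' intr_scale hc.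
  rewrite (eq_bigr (fun i : 'I_m => D%:~R *: (k i *: v i))) ?hk -?scaler_sumr ?hk ?scaler0 // => i _; by rewrite scalerA mulrC.
exists i0; split; first exact: ltn_ord.
rewrite hc'; apply/negP => /eqP h0; move: (hc i0); rewrite h0 mulr0z => /esym /eqP.
by rewrite mulf_eq0 (negbTE hi0) intr_eq0 (negbTE hD).
Qed.

Lemma int_rel (p m : nat) (v : nat -> K) : prime p -> (\dim {:K} < m)%N ->
  exists c : nat -> int, \sum_(i < m) (c i)%:~R * v i = 0 /\
     exists i, (i < m)%N /\ ~~ (p %| `|c i|)%N.
Proof.
move=> pp hm; have [c0 [h0 [i0 [hi0 hci0]]]] := int_rel0 v hm.
have p1 : (1 < p)%N by apply: prime_gt1.
suff main : forall N (c : nat -> int) i, (i < m)%N -> c i != 0 -> (`|c i| < N)%N ->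
   \sum_(i < m) (c i)%:~R * v i = 0 ->
   exists c : nat -> int, \sum_(i < m) (c i)%:~R * v i = 0 /\
     exists i, (i < m)%N /\ ~~ (p %| `|c i|)%N.
  exact: (main (`|c0 i0|).+1 c0 i0 hi0 hci0 (ltnSn _) h0).
elim=> [|N IH] c i hi hci hN hrel //.
case: (classic (exists j, (j < m)%N /\ ~~ (p %| `|c j|)%N)) => [ex|nex]; first by exists c.
have hdiv j : (j < m)%N -> (p %| `|c j|)%N.
  by move=> hj; apply/negPn/negP => hn; apply: nex; exists j.
pose c2 j := ((c j) %/ p%:Z)%Z.
have hc2 j : (j < m)%N -> c j = c2 j * p%:Z.
  by move=> hj; rewrite divzK // dvdzE absz_nat; apply: hdiv.
apply: (IH c2 i hi).
- by apply: contraNneq hci => e; rewrite hc2 // e mul0r.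
- move: hN; rewrite (hc2 i hi) abszM absz_nat => hN.
  have h1 : (0 < `|c2 i|)%N by rewrite absz_gt0; apply: contraNneq hci => e; rewrite hc2 // e mul0r.
  exact: (leq_trans (ltn_Pmulr p1 h1)).
- have : (p%:R : K) * \sum_(j < m) (c2 j)%:~R * v j = 0.
    rewrite -[RHS]hrel big_distrr; apply: eq_bigr => j _ /=.
    rewrite (hc2 j (ltn_ord j)) intrM mulrC -!mulrA; congr (_ * _); rewrite mulrC; by [].
  by move/eqP; rewrite mulf_eq0 (negbTE (natr_neq0 (ltnW p1))) /= => /eqP.
Qed.

Lemma notinP (P : K -> Prop) (p : nat) (c : int) : is_ideal P -> ~ P 1 -> P (p%:R) -> prime p ->
  ~~ (p %| `|c|)%N -> ~ P (c%:~R).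
Proof.
move=> hP hP1 hp pp hc hPc; have [u [w e]] := Bezoutz p%:Z c.
have : gcdz p%:Z c = 1.
  by rewrite /gcdz absz_nat; congr Posz; apply/eqP; rewrite -/(coprime p `|c|) prime_coprime.
move=> g; rewrite g in e.
have e' : (1 : K) = u%:~R * p%:R + w%:~R * c%:~R.
  by rewrite -[p%:R]/((p%:Z)%:~R) -!intrM -intrD e.
apply: hP1; rewrite e'; apply: I_add => //; [apply: I_mul => //| apply: I_mul => //]; exact: Int_int.
Qed.
End Main3.



Section Main4.
Variable K : fieldExtType rat.
Local Notation Int := (@integralZ K).
Variables (P : K -> Prop) (p : nat).
Hypotheses (hP : is_ideal P) (hP1 : ~ P 1) (hp : P p%:R) (pp : prime p).
Local Notation n := (\dim {:K}).

Lemma key (x : nat -> K) : (forall i, P (x i)) ->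
  exists s, Int s /\ ~ P s /\ exists w, Int w /\ s * \prod_(0 <= i < n) x i = p%:R * w.
Proof.
move=> hx.
have hxI i : Int (x i) by apply: (I_Int hP).
pose v k := \prod_(0 <= i < k) x i.
have hv k : Int (v k) by apply: Int_prod.
have [c [hrel ex]] := int_rel v pp (ltnSn n).
have ex' : exists k, [pred k | (k < n.+1)%N && ~~ (p %| `|c k|)%N] k.
  by case: ex => k [h1 h2]; exists k; rewrite /= h1 h2.
case: (ex_minnP ex') => j /andP [hj hcj] hmin.
have hlt k : (k < j)%N -> (p %| `|c k|)%N.
  move=> hk; apply/negPn/negP => hn.
  have := hmin k; rewrite /= hn andbT => /(_ (ltn_trans hk hj)).
  by rewrite leqNgt hk.
pose z k := \prod_(j <= i < k) x i.
have hz k : Int (z k) by apply: Int_prod.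
have hvz k : (j <= k)%N -> v k = v j * z k.
  by move=> hk; rewrite /v /z (big_cat_nat (leq0n j) hk).
pose s := \sum_(j <= k < n.+1) (c k)%:~R * z k.
have hs : Int s by apply: Int_sum => k _; apply: Int_mul => //; exact: Int_int.
have hsplit : \sum_(0 <= k < j) (c k)%:~R * v k + v j * s = 0.
  rewrite -[RHS]hrel -(big_mkord xpredT (fun k => (c k)%:~R * v k)) (big_cat_nat (leq0n j) (ltnW hj)) /=; congr (_ + _).
  rewrite /s big_distrr; apply: eq_big_nat => k /andP [hk _].
  by rewrite (hvz k) // mulrCA.
have hsP : ~ P s.
  move=> hPs; apply: (notinP hP hP1 hp pp hcj).
  have -> : (c j)%:~R = s - \sum_(j.+1 <= k < n.+1) (c k)%:~R * z k.
    by rewrite /s big_ltn // /z big_geq // mulr1 addrK.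
  apply: (I_sub hP) => //.
  rewrite (eq_big_nat _ _ (F2 := fun k => (c k)%:~R * (x j * \prod_(j.+1 <= i < k) x i))); last first.
    by move=> k /andP [hk _]; rewrite /z big_ltn.
  apply: (I_sum hP) => k _ /=; apply: I_mul; [exact: hP | exact: Int_int |]; apply: (I_mulr hP) => //.
  exact: Int_prod.
exists s; split=> //; split=> //.
exists (- (\sum_(0 <= k < j) ((c k %/ p%:Z)%Z)%:~R * v k) * z n); split.
  apply: Int_mul => //; apply: Int_opp; apply: Int_sum => k _; apply: Int_mul => //; exact: Int_int.
have -> : \prod_(0 <= i < n) x i = v j * z n by rewrite -hvz // -ltnS.
have e : \sum_(0 <= k < j) (c k)%:~R * v k = p%:R * \sum_(0 <= k < j) ((c k %/ p%:Z)%Z)%:~R * v k.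
  rewrite big_distrr; apply: eq_big_nat => k /andP [_ hk].
  rewrite /= mulrA -[p%:R]/((p%:Z)%:~R) -intrM [(p%:Z * _)%R]mulrC divzK //.
  by rewrite dvdzE absz_nat; apply: hlt.
move: hsplit; rewrite e => /eqP; rewrite addrC addr_eq0 => /eqP h.
rewrite mulrA [s * _]mulrC h; ring.
Qed.
End Main4.



Section Main5.
Variable K : fieldExtType rat.
Local Notation Int := (@integralZ K).
Variables (f : K -> nat) (t : nat) (P : K -> Prop) (p : nat).
Hypotheses (ht : (0 < t)%N) (hP : is_ideal P) (hP1 : ~ P 1) (hp : P p%:R) (pp : prime p).
Hypothesis hprime : forall x y, Int x -> Int y -> P (x * y) -> P x \/ P y.
Local Notation n := (\dim {:K}).
Local Notation H := (Hft f t).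

Lemma notP_mul s1 s2 : Int s1 -> Int s2 -> ~ P s1 -> ~ P s2 -> ~ P (s1 * s2).
Proof. by move=> h1 h2 n1 n2 /(hprime h1 h2) []. Qed.

Lemma blocks F (x : nat -> K) : (forall i, P (x i)) ->
  exists s, Int s /\ ~ P s /\ exists w, Int w /\ s * \prod_(0 <= i < n * F) x i = (p%:R) ^+ F * w.
Proof.
move=> hx; have hxI i : Int (x i) by apply: (I_Int hP).
elim: F => [|F [s1 [hs1 [ns1 [w1 [hw1 e1]]]]]].
  exists 1; split; first exact: Int1; split=> //; exists 1; split; first exact: Int1.
  by rewrite muln0 big_geq // expr0.
have [s2 [hs2 [ns2 [w2 [hw2 e2]]]]] := key hP hP1 hp pp (fun i => hx (n * F + i)%N).
exists (s1 * s2); split; first exact: Int_mul.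
split; first exact: notP_mul.
exists (w1 * w2); split; first exact: Int_mul.
rewrite mulnS addnC (big_cat_nat (leq0n (n * F))) ?leq_addr // .
have -> : \prod_(n * F <= i < n * F + n) x i = \prod_(0 <= i < n) x (n * F + i)%N.
  rewrite -{1}[(n * F)%N]add0n big_addn addKn; apply: eq_bigr => i _; by rewrite addnC.
rewrite exprS; set A := \prod_(0 <= i < n * F) x i; set B := \prod_(0 <= i < n) _.
rewrite mulrACA e1; rewrite -/B in e2; rewrite e2.
by rewrite mulrACA [p%:R ^+ F * _]mulrC.
Qed.

Definition W z := exists s, Int s /\ ~ P s /\ H (s * z).

Lemma toH (x : nat -> K) : (forall i, P (x i)) -> W (\prod_(0 <= i < n * f p%:R) x i).
Proof.
move=> hx; have [s1 [hs1 [ns1 [w [hw e]]]]] := blocks (f p%:R) hx.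
have hpI : Int (p%:R : K) by apply: Int_nat.
exists ((1 - p%:R ^+ t) * s1); split.
  by apply: Int_mul => //; apply: Int_sub; [exact: Int1 | exact: Int_exp].
split.
  apply: notP_mul => //; first by apply: Int_sub; [exact: Int1 | exact: Int_exp].
  move=> h; apply: hP1; have -> : (1 : K) = (1 - p%:R ^+ t) + p%:R ^+ t by rewrite subrK.
  apply: (I_add hP) => //; case: t ht => // t' _; rewrite exprS; apply: (I_mulr hP) => //.
  exact: Int_exp.
rewrite -mulrA e mulrA mulrC; apply: (I_mul (H_ideal f t)) => //.
have -> : (1 - p%:R ^+ t) * p%:R ^+ f p%:R = - ((p%:R : K) ^+ f p%:R * (p%:R ^+ t - 1)).
  by rewrite mulrC -mulrN opprB.
by apply: (I_opp (H_ideal f t)); apply: H_gen.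
Qed.

Lemma W0 : W 0.
Proof. exists 1; split; first exact: Int1; split=> //; rewrite mulr0; exact: (I0 (H_ideal f t)). Qed.

Lemma W_add a b : W a -> W b -> W (a + b).
Proof.
move=> [s1 [h1 [n1 e1]]] [s2 [h2 [n2 e2]]]; exists (s1 * s2); split; first exact: Int_mul.
split; first exact: notP_mul.
have -> : s1 * s2 * (a + b) = s2 * (s1 * a) + s1 * (s2 * b).
  by rewrite mulrDr -!mulrA mulrCA.
by apply: (I_add (H_ideal f t)); apply: (I_mul (H_ideal f t)).
Qed.

Lemma W_mul c a : Int c -> W a -> W (c * a).
Proof.
move=> hc [s [hs [ns e]]]; exists s; split=> //; split=> //.
by rewrite mulrCA; apply: (I_mul (H_ideal f t)).
Qed.

Lemma toPow k : forall m (y : nat -> K), (forall i, P (y i)) -> (m + k)%N = (n * f p%:R)%N ->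
  forall x, ideal_pow P k x -> W (\prod_(0 <= i < m) y i * x).
Proof.
elim: k => [|k IH] m y hy hm x hx.
  by rewrite addn0 in hm; rewrite mulrC; apply: W_mul => //; rewrite hm; apply: toH.
move/powS: hx; apply: (sums_ind (S := fun z => W (\prod_(0 <= i < m) y i * z))).
- by rewrite mulr0; exact: W0.
- by move=> a b ha hb; rewrite mulrDr; apply: W_add.
move=> q [a [b [[ha hb] ->]]].
pose y' i := if i == m then a else y i.
have hy' i : P (y' i) by rewrite /y'; case: (i == m).
have hm' : (m.+1 + k)%N = (n * f p%:R)%N by rewrite addSnnS.
have := IH m.+1 y' hy' hm' b hb.
rewrite big_nat_recr // /y' eqxx.
rewrite (eq_big_nat _ _ (F2 := y)); first by rewrite mulrA.
by move=> i /andP [_ hi]; rewrite (ltn_eqF hi).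
Qed.

Lemma local_step a : (forall N, exists h, H h /\ ideal_pow P N (a - h)) -> W a.
Proof.
move=> hN; have [h [hh hah]] := hN (n * f p%:R)%N.
have := toPow (y := fun _ => 0) (fun _ => I0 hP) (add0n _) hah.
rewrite big_geq // mul1r => [[s [hs [ns e]]]]; exists s; split=> //; split=> //.
have -> : s * a = s * (a - h) + s * h by rewrite -mulrDr subrK.
by apply: (I_add (H_ideal f t)) => //; apply: (I_mul (H_ideal f t)).
Qed.
End Main5.



Section Main6.
Variable K : fieldExtType rat.
Local Notation Int := (@integralZ K).
Local Notation n := (\dim {:K}).
Variable T : K -> Prop.
Hypotheses (hT : is_ideal T) (hT1 : ~ T 1).

Definition J0 (p : nat) z := exists u w, T u /\ Int w /\ z = u + p%:R * w.

Lemma J0_ideal p : is_ideal (J0 p).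
Proof.
split.
- move=> z [u [w [hu [hw ->]]]]; apply: Int_add; first exact: (I_Int hT).
  by apply: Int_mul => //; exact: Int_nat.
- by exists 0, 0; rewrite mulr0 addr0; split; [exact: (I0 hT) | split; [exact: Int0|]].
- move=> z1 z2 [u1 [w1 [h1 [hw1 ->]]]] [u2 [w2 [h2 [hw2 ->]]]].
  exists (u1 + u2), (w1 + w2); split; first exact: (I_add hT).
  by split; [exact: Int_add | rewrite mulrDr addrACA].
- move=> c z hc [u [w [hu [hw ->]]]]; exists (c * u), (c * w); split; first exact: (I_mul hT).
  by split; [exact: Int_mul | rewrite mulrDr mulrCA].
Qed.

Lemma J0_p p z : Int z -> J0 p (p%:R * z).
Proof. by move=> hz; exists 0, z; rewrite add0r; split; [exact: (I0 hT)|]. Qed.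
Lemma J0_T p z : T z -> J0 p z.
Proof. by move=> hz; exists z, 0; rewrite mulr0 addr0; split=> //; split=> //; exact: Int0. Qed.

Lemma prime_exists m : (0 < m)%N -> T (m%:R) -> exists p, prime p /\ ~ J0 p 1.
Proof.
suff : forall N m, (m < N)%N -> (0 < m)%N -> T (m%:R) -> exists p, prime p /\ ~ J0 p 1.
  by move=> h; apply: (h m.+1).
elim=> [|N IH] {}m hmN hm hTm //.
case: (leqP m 1) => hm1.
  have e : m = 1%N by apply/eqP; rewrite eqn_leq hm1 hm.
  by exfalso; apply: hT1; rewrite e in hTm.
have pp := pdiv_prime hm1.
set p := pdiv m in pp *.
case: (classic (J0 p 1)) => [[u [w [hu [hw e]]]]|hn]; last by exists p.
have hpm : (p %| m)%N := pdiv_dvd m.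
have hlt : (m %/ p < m)%N by apply: ltn_Pdiv => //; apply: prime_gt1.
apply: (IH (m %/ p)%N); first by apply: leq_trans hlt _; rewrite -ltnS.
  by rewrite divn_gt0 ?prime_gt0 // dvdn_leq.
have -> : ((m %/ p)%:R : K) = (m %/ p)%:R * u + m%:R * w.
  have e' := congr1 (fun z => ((m %/ p)%:R : K) * z) e; rewrite /= mulr1 in e'.
  by rewrite {1}e' mulrDr mulrA -natrM divnK.
apply: (I_add hT); first by apply: (I_mul hT) => //; exact: Int_nat.
by rewrite mulrC; apply: (I_mul hT).
Qed.

Section Dim.
Variable p : nat.
Hypothesis pp : prime p.

Definition indep d (u : nat -> K) := forall c : nat -> int,
  (exists w, Int w /\ \sum_(i < d) (c i)%:~R * u i = p%:R * w) ->
  forall i, (i < d)%N -> (p %| `|c i|)%N.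

Lemma indep_bound d u : (forall i, (i < d)%N -> Int (u i)) -> indep d u -> (d <= n)%N.
Proof.
move=> hu hind; rewrite leqNgt; apply/negP => hd.
have [c [hc [i [hi hci]]]] := int_rel u pp hd.
move/negP: hci; apply; apply: hind hi; exists 0; split; first exact: Int0.
by rewrite mulr0.
Qed.

Definition good d := exists J : K -> Prop, [/\ is_ideal J, ~ J 1, (forall z, J0 p z -> J z) &
  exists u, (forall i, (i < d)%N -> J (u i)) /\ indep d u].

Lemma good_bound d : good d -> (d <= n)%N.
Proof.
move=> [J [hJ _ _ [u [hu hi]]]]; apply: (indep_bound _ hi) => i hid.
exact: (I_Int hJ (hu i hid)).
Qed.

Lemma max_exists : ~ J0 p 1 -> exists J, maximal_ideal J /\ forall z, J0 p z -> J z.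
Proof.
move=> hJ01.
pose pb d := (if excluded_middle_informative (good d) then true else false).
have ex : exists d, pb d.
  exists 0%N; rewrite /pb; case: (excluded_middle_informative (good _)) => // ng; exfalso; apply: ng.
  exists (J0 p); split=> //; first exact: J0_ideal.
  by exists (fun _ => 0); split=> // c _ i.
have ub : forall d, pb d -> (d <= n)%N.
  by move=> d; rewrite /pb; case: (excluded_middle_informative (good _)) => // g _; apply: good_bound.
have pbE d : pb d -> good d by rewrite /pb; case: (excluded_middle_informative (good d)).
have pbI d : good d -> pb d by rewrite /pb; case: (excluded_middle_informative (good d)).
case: (ex_maxnP ex ub) => d hd hmax.
have [J [hJ hJ1 hJ0 [u [hu hind]]]] : good d.
  exact: pbE hd.
exists J; split=> //; split=> // J' hJ' hJJ'.
case: (classic (J' 1)) => hJ'1; [by right | left].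
move=> x hx; apply: NNPP => nJx.
have hxI : Int x by apply: (I_Int hJ' hx).
have huI i : (i < d)%N -> Int (u i) by move=> hi; apply: (I_Int hJ (hu i hi)).
pose u' i := if i == d then x else u i.
suff : good d.+1.
  by move=> /pbI /hmax; rewrite ltnn.
exists J'; split=> //; first by move=> z /hJ0 /hJJ'.
exists u'; split.
  move=> i hi; rewrite /u'; case: eqP => // /eqP hid; apply: hJJ'; apply: hu.
  by rewrite ltn_neqAle hid -ltnS.
move=> c [w [hw e]].
rewrite big_ord_recr /= {2}/u' eqxx in e.
have e2 : \sum_(i < d) (c i)%:~R * u i + (c d)%:~R * x = p%:R * w.
  rewrite -e; congr (_ + _); apply: eq_bigr => i _; rewrite /u' ifN //.
  by rewrite neq_ltn ltn_ord.
have hcd : (p %| `|c d|)%N.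
  apply: NNPP => hn; apply: nJx; move/negP: hn => hn.
  have [al [be eb]] := Bezoutz (c d) p%:Z.
  have g : gcdz (c d) p%:Z = 1.
    by rewrite /gcdz absz_nat gcdnC; congr Posz; apply/eqP; rewrite -/(coprime p `|c d|) prime_coprime.
  rewrite g in eb.
  have -> : x = al%:~R * (p%:R * w - \sum_(i < d) (c i)%:~R * u i) + be%:~R * (p%:R * x).
    rewrite -e2 (addrC (\sum_(i < d) _)) addrK mulrA -intrM mulrA -[p%:R]/((p%:Z)%:~R) -intrM -mulrDl -intrD eb mul1r.
    by [].
  apply: (I_add hJ); apply: (I_mul hJ); try exact: Int_int.
  - apply: (I_sub hJ); first by apply: hJ0; apply: J0_p.
    apply: (I_sum hJ) => i _; apply: (I_mul hJ); first exact: Int_int.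
    exact: hu.
  - by apply: hJ0; apply: J0_p.
pose c2 := ((c d) %/ p%:Z)%Z.
have hc2 : c d = c2 * p%:Z by rewrite divzK // dvdzE absz_nat.
have e3 : \sum_(i < d) (c i)%:~R * u i = p%:R * (w - c2%:~R * x).
  rewrite mulrBr -e2 hc2 intrM -[p%:R]/((p%:Z)%:~R).
  by rewrite [(c2%:~R * _)]mulrC -mulrA addrK.
have hi := hind c; move=> i; rewrite ltnS leq_eqVlt => /orP [/eqP -> //|hid].
apply: hi hid; exists (w - c2%:~R * x); split=> //.
by apply: Int_sub => //; apply: Int_mul => //; exact: Int_int.
Qed.
End Dim.
End Main6.

Unset Implicit Arguments.
Set Strict Implicit.
Theorem mainTheorem13 (K : fieldExtType rat) (f : K -> nat) (t : nat) :
  (0 < t)%N ->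
  (forall a : K, ker_pr t a -> Hft f t a) /\ t_congruing t (Hft f t).
Proof.
move=> ht; split; last first.
  by move=> a ha; exists (f a); apply: H_gen.
move=> a [ha hker]; apply: NNPP => nHa.
have hH := @H_ideal K f t.
pose T r := integralZ r /\ Hft f t (r * a).
have hT : is_ideal T.
  split.
  - by move=> x [].
  - by split; [exact: Int0 | rewrite mul0r; exact: (I0 hH)].
  - move=> x y [hx ex] [hy ey]; split; first exact: Int_add.
    by rewrite mulrDl; apply: (I_add hH).
  - move=> c x hc [hx ex]; split; first exact: Int_mul.
    by rewrite -mulrA; apply: (I_mul hH).
have hT1 : ~ T 1 by move=> [_]; rewrite mul1r.
pose M := (2 ^ f 2%:R * (2 ^ t - 1))%N.
have hM : (0 < M)%N.
  rewrite muln_gt0 expn_gt0 /= subn_gt0 -{1}(expn0 2) ltn_exp2l //.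
have hTM : T M%:R.
  split; first exact: Int_nat.
  have -> : (M%:R : K) = 2%:R ^+ f 2%:R * (2%:R ^+ t - 1).
    rewrite /M natrM natrB ?natrX // expn_gt0 //.
  rewrite mulrC; apply: (I_mul hH) => //; apply: H_gen; exact: Int_nat.
have [p [pp nJ]] := prime_exists hT hT1 hM hTM.
have [J [maxJ hJ0]] := max_exists hT pp nJ.
have hprime := fun x y => @max_prime K J x y maxJ.
have hhker := hker J maxJ.
case: maxJ => hJ hJ1 _.
have hp : J p%:R.
  by apply: hJ0; rewrite -[p%:R]mulr1; apply: J0_p => //; exact: Int1.
have hstep := step1 f hJ hhker.
have [s [hs [ns es]]] := @local_step K f t J p ht hJ hJ1 hp pp hprime a hstep.
by apply: ns; apply: hJ0; apply: J0_T.
Qed.
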